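(* Let $q\ge 7$ and $s\in[1,7]$ be integers, $C$ a finite set with $|C|=2q+s$, and $M\in\mathcal M(6,q,C)$. Suppose the maximum degree of the graph $G$ associated with $M$ equals $3$, $\{i,j,k,l,m,n\}=\{1,\dots,6\}$, and $r(i,l)\ge1$, $r(j,l)\ge1$, $r(k,l)\ge1$. Then $r(l,m,n)\ge q+3s-24$.
   Context: $\mathcal M(6,q,C)$ is the set of $6\times q$ matrices $M$ with entries from $C$ such that each row has $q$ pairwise distinct entries, each column has $6$ pairwise distinct entries, and every pair of distinct colours of $C$ appears together in some row or some column of $M$. The frequency of a colour is the number of entries of $M$ equal to it. For rows $a\ne b$, $r(a,b)$ is the number of colours of frequency exactly $2$ appearing in both row $a$ and row $b$; for distinct rows $a,b,c$, $r(a,b,c)$ is the number of colours of frequency exactly $3$ appearing in each of rows $a,b,c$. The graph $G$ associated with $M$ has vertex set $\{1,\dots,6\}$, with $\{a,b\}$ an edge iff $r(a,b)\ge 1$. *)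

(* Defs.v *)
From mathcomp Require Import all_boot all_order all_algebra.
Set Implicit Arguments. Unset Strict Implicit. Unset Printing Implicit Defensive.

(* Rows are indexed by 'I_6 (row a+1 of the paper is index a), columns by 'I_q. *)

Section Defs.
Variables (C : finType) (q : nat).
Implicit Types (M : 'M[C]_(6, q)).

Definition in_row M (a : 'I_6) (c : C) : bool := [exists j, M a j == c].
Definition in_col M (j : 'I_q) (c : C) : bool := [exists a, M a j == c].

Definition inM M : Prop :=
  [/\ (forall a : 'I_6, injective (fun j : 'I_q => M a j)),
      (forall j : 'I_q, injective (fun a : 'I_6 => M a j)) &
      (forall c d : C, c != d ->
         (exists a, in_row M a c && in_row M a d) \/
         (exists j, in_col M j c && in_col M j d))].

Definition freq M (c : C) : nat := #|[set p : 'I_6 * 'I_q | M p.1 p.2 == c]|.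

Definition r2 M (a b : 'I_6) : nat :=
  #|[set c : C | [&& freq M c == 2, in_row M a c & in_row M b c]]|.

Definition r3 M (a b d : 'I_6) : nat :=
  #|[set c : C | [&& freq M c == 3, in_row M a c, in_row M b c & in_row M d c]]|.

Definition Gadj M (a b : 'I_6) : bool := (a != b) && (1 <= r2 M a b).
Definition Gdeg M (a : 'I_6) : nat := #|[set b | Gadj M a b]|.
Definition maxdeg M : nat := \max_(a : 'I_6) Gdeg M a.

End Defs.

(* Main.v *)
Require Import Defs.
From mathcomp Require Import all_boot all_order all_algebra zify.
Import GRing.Theory Num.Theory.
Set Implicit Arguments. Unset Strict Implicit. Unset Printing Implicit Defensive.

Definition rowsc (C : finType) q (M : 'M[C]_(6, q)) (c : C) : {set 'I_6} :=
  [set a | in_row M a c].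
Definition Rw (C : finType) q (M : 'M[C]_(6, q)) (a : 'I_6) : {set C} :=
  [set d | in_row M a d].
Definition Uc (C : finType) q (M : 'M[C]_(6, q)) (c : C) : {set C} :=
  [set d | [exists a, in_row M a c && in_row M a d]].
Definition Xc (C : finType) q (M : 'M[C]_(6, q)) (c : C) : {set 'I_6 * 'I_q} :=
  setX [set a | ~~ in_row M a c] [set j | in_col M j c].

Lemma freq_rows (C : finType) q (M : 'M[C]_(6, q)) c :
  inM M -> freq M c = #|rowsc M c|.
Proof.
case=> Hr _ _; rewrite /freq.
have -> : rowsc M c = [set p.1 | p in [set p : 'I_6 * 'I_q | M p.1 p.2 == c]].
  apply/setP => a; rewrite !inE; apply/existsP/imsetP.
    by case=> j Hj; exists (a, j); rewrite ?inE.
  by case=> [[a' j]]; rewrite inE /= => Hj ->; exists j.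
rewrite card_in_imset // => x y; rewrite !inE; case: x => a1 j1; case: y => a2 j2 /= /eqP H1 /eqP H2 E.
by subst a2; congr pair; apply: (Hr a1); rewrite /= H1 H2.
Qed.

Lemma cols_le (C : finType) q (M : 'M[C]_(6, q)) c :
  inM M -> #|[set j | in_col M j c]| <= #|rowsc M c|.
Proof.
move=> HM; rewrite -freq_rows // /freq.
have -> : [set j | in_col M j c] = [set p.2 | p in [set p : 'I_6 * 'I_q | M p.1 p.2 == c]].
  apply/setP => j; rewrite !inE; apply/existsP/imsetP.
    by case=> a Hj; exists (a, j); rewrite ?inE.
  by case=> [[a j']]; rewrite inE /= => Hj ->; exists a.
exact: leq_imset_card.
Qed.

Lemma card_Rw (C : finType) q (M : 'M[C]_(6, q)) a : inM M -> #|Rw M a| = q.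
Proof.
case=> Hr _ _.
have -> : Rw M a = [set M a j | j in [set: 'I_q]].
  apply/setP => d; rewrite !inE; apply/existsP/imsetP.
    by case=> j /eqP <-; exists j.
  by case=> j _ ->; exists j.
by rewrite card_in_imset ?cardsT ?card_ord // => x y _ _; apply: Hr.
Qed.

Lemma cover6 (C : finType) q (M : 'M[C]_(6, q)) c a0 :
  inM M -> in_row M a0 c -> #|C| <= #|Uc M c| + (6 - #|rowsc M c|) * #|rowsc M c|.
Proof.
move=> HM Ha0; have [_ _ Hp] := HM.
have sub : [set: C] \subset Uc M c :|: [set M p.1 p.2 | p in Xc M c].
  apply/subsetP => d _; rewrite !inE.
  case: (eqVneq d c) => [->|ndc].
    by apply/orP; left; apply/existsP; exists a0; rewrite Ha0.
  have /Hp : c != d by rewrite eq_sym.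
  case=> [[a /andP[H1 H2]]|[j /andP[H1 H2]]].
  - by apply/orP; left; apply/existsP; exists a; rewrite H1 H2.
  - case/existsP: H2 => a /eqP Ea.
    case Hac: (in_row M a c).
      apply/orP; left; apply/existsP; exists a; rewrite Hac /=.
      by apply/existsP; exists j; rewrite Ea.
    apply/orP; right; apply/imsetP; exists (a, j) => //.
    by rewrite !inE Hac H1.
have H := subset_leq_card sub; rewrite cardsT in H.
have h4 := cardsUI (Uc M c) [set M p.1 p.2 | p in Xc M c].
have h3 : #|[set M p.1 p.2 | p in Xc M c]| <= #|Xc M c| by apply: leq_imset_card.
rewrite /Xc cardsX in h3.
have h2 := cardsC (rowsc M c); rewrite card_ord in h2.
have E : ~: rowsc M c = [set a | ~~ in_row M a c] by apply/setP => x; rewrite !inE.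
rewrite E in h2.
have h1 := cols_le c HM.
have h5 : #|[set a | ~~ in_row M a c]| * #|[set j | in_col M j c]| <=
          (6 - #|rowsc M c|) * #|rowsc M c|.
  apply: leq_mul => //. move: h2; set x := #|rowsc M c|; set y := #|[set a | ~~ in_row M a c]|; clearbody x y. lia.
move: h3 h4 h5 H; rewrite -/(Xc M c). 
set u := #|Uc M c|; set v := #|[set M p.1 p.2 | p in Xc M c]|; set w := #|[set a | ~~ in_row M a c]| * _; set z := (6 - _) * _.
clearbody u v w z. lia.
Qed.

Lemma rows_ge2 (C : finType) q s (M : 'M[C]_(6, q)) c a :
  inM M -> 7 <= q -> #|C| = 2 * q + s -> in_row M a c -> 2 <= #|rowsc M c|.
Proof.
move=> HM hq hC Ha.
have Hcov := cover6 HM Ha.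
have : 0 < #|rowsc M c| by apply/card_gt0P; exists a; rewrite inE.
rewrite leq_eqVlt => /orP[/eqP E1|//].
have /cards1P [b Eb] : #|rowsc M c| == 1 by rewrite -E1.
have sub : Uc M c \subset Rw M b.
  apply/subsetP => d; rewrite !inE => /existsP [a' /andP [H1 H2]].
  have : a' \in rowsc M c by rewrite inE.
  by rewrite Eb inE => /eqP <-.
have := subset_leq_card sub; rewrite card_Rw // => h.
move: Hcov; rewrite -E1 => Hcov. lia.
Qed.

Lemma r2C (C : finType) q (M : 'M[C]_(6, q)) a b : r2 M a b = r2 M b a.
Proof. by apply: eq_card => x; rewrite !inE [in_row M a x && _]andbC. Qed.

Lemma inter (C : finType) q s (M : 'M[C]_(6, q)) a b :
  inM M -> #|C| = 2 * q + s -> a != b -> 1 <= r2 M a b -> #|Rw M a :&: Rw M b| + s <= 8.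
Proof.
move=> HM hC nab /card_gt0P [c]; rewrite inE => /and3P [/eqP F Ha Hb].
have Hcov := cover6 HM Ha.
rewrite freq_rows // in F.
have Eab : rowsc M c = [set a; b].
  apply/esym/eqP; rewrite eqEcard F cards2 nab andbT.
  by apply/subsetP => x; rewrite !inE => /orP [] /eqP ->.
have sub : Uc M c \subset Rw M a :|: Rw M b.
  apply/subsetP => d; rewrite !inE => /existsP [a' /andP [H1 H2]].
  have : a' \in rowsc M c by rewrite inE.
  by rewrite Eab !inE => /orP [] /eqP <-; rewrite H2 ?orbT.
have := subset_leq_card sub => h.
have := cardsUI (Rw M a) (Rw M b); rewrite !card_Rw //.
move: Hcov; rewrite F. lia.
Qed.

Ltac neqs := repeat (apply/andP; split); try done; try assumption; try (rewrite eq_sym; assumption).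

Lemma two_case (C : finType) q s (M : 'M[C]_(6, q)) x l y :
  inM M -> 7 <= q -> #|C| = 2 * q + s -> in_row M l x ->
  rowsc M x \subset [set l; y] -> ~~ (1 <= r2 M l y) -> False.
Proof.
move=> HM hq hC Hl sub nr.
have h2 := rows_ge2 HM hq hC Hl.
have h3 := subset_leq_card sub.
have h4 : #|[set l; y]| <= 2 by rewrite cards2 ltnS leq_b1.
case Hy: (in_row M y x).
  move/negP: nr; apply; apply/card_gt0P; exists x.
  by rewrite inE Hl Hy freq_rows // andbT eqn_leq h2 (leq_trans h3 h4).
have sub1 : rowsc M x \subset [set l].
  apply/subsetP => a Ha; move/subsetP: sub => /(_ a Ha); rewrite !inE.
  by case/orP => // /eqP E; move: Ha; rewrite E inE Hy.
have := subset_leq_card sub1; rewrite cards1; lia.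
Qed.

Theorem claim6 (q s : nat) (C : finType) (M : 'M[C]_(6, q))
  (i j k l m n : 'I_6) :
  7 <= q -> 1 <= s <= 7 -> #|C| = 2 * q + s ->
  inM M -> maxdeg M = 3 ->
  uniq [:: i; j; k; l; m; n] ->
  1 <= r2 M i l -> 1 <= r2 M j l -> 1 <= r2 M k l ->
  ((q%:Z + 3 * s%:Z - 24)%R <= (r3 M l m n)%:Z)%R.
Proof.
move=> hq /andP [hs1 hs7] hC HM hmax U ril rjl rkl.
move: (U); rewrite /= !inE !negb_or -!andbA  => /andP [d1 /andP [d2 /andP [d3 /andP [d4 /andP [d5 /andP [d6 /andP [d7 /andP [d8 /andP [d9 /andP [d10 /andP [d11 /andP [d12 /andP [d13 /andP [d14 /andP [d15 _]]]]]]]]]]]]]]].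
have all6 : forall a : 'I_6, a \in [:: i; j; k; l; m; n].
  move=> a.
  have E : #|[:: i; j; k; l; m; n]| = #|[pred x : 'I_6 | true]|.
    by rewrite (card_uniqP U) card_ord.
  by have /subset_cardP/(_ (subset_predT _)) := E; move=> ->.
have Hdeg : Gdeg M l <= 3 by move: (@leq_bigmax _ (fun a => Gdeg M a) l); rewrite -/(maxdeg M) hmax.
have nr : forall y, y \in [:: m; n] -> ~~ (1 <= r2 M l y).
  move=> y Hy; apply/negP => ry.
  have U4 : uniq [:: i; j; k; y].
    move: Hy; rewrite !inE => /orP [] /eqP ->; rewrite /= ?inE ?negb_or; neqs.
  have ly : l != y by move: Hy; rewrite !inE => /orP [] /eqP ->; neqs.
  have sub : [:: i; j; k; y] \subset [set b | Gadj M l b].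
    apply/subsetP => b; rewrite !inE /Gadj.
    move=> /or4P [] /eqP ->; rewrite ?(r2C M l i) ?(r2C M l j) ?(r2C M l k) ?ril ?rjl ?rkl ?ry andbT; neqs.
  have := subset_leq_card sub; rewrite (card_uniqP U4) /= -/(Gdeg M l). move=> h; clear -h Hdeg. lia.
set A := Rw M l :\: (Rw M i :|: Rw M j :|: Rw M k).
have hA : q <= #|A| + (8 - s) * 3.
  have h0 := cardsID (Rw M i :|: Rw M j :|: Rw M k) (Rw M l).
  rewrite card_Rw // !setIUr in h0.
  have h1 := cardsUI (Rw M l :&: Rw M i :|: Rw M l :&: Rw M j) (Rw M l :&: Rw M k).
  have h2 := cardsUI (Rw M l :&: Rw M i) (Rw M l :&: Rw M j).
  have e1 := inter HM hC d3 ril; have e2 := inter HM hC d7 rjl; have e3 := inter HM hC d10 rkl.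
  rewrite setIC in e1; rewrite setIC in e2; rewrite setIC in e3.
  move: h0 h1 h2 e1 e2 e3; rewrite -/A.
  set x1 := #|A|; set x2 := #|Rw M l :&: Rw M i|; set x3 := #|Rw M l :&: Rw M j|; set x4 := #|Rw M l :&: Rw M k|.
  set y1 := #|_ :|: _ :|: _|; set y2 := #|_ :|: _|.
  set z1 := #|(_ :|: _) :&: _|; set z2 := #|_ :&: Rw M i :&: _|.
  clearbody x1 x2 x3 x4 y1 y2 z1 z2.
  clear -hs7; lia.
have sub : A \subset [set c : C | [&& freq M c == 3, in_row M l c, in_row M m c & in_row M n c]].
  apply/subsetP => x; rewrite !inE negb_or negb_or => /andP [/andP [/andP [Hi Hj] Hk] Hl].
  have R3 : rowsc M x \subset [set l; m; n].
    apply/subsetP => a; rewrite !inE => Ha.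
    move: (all6 a); rewrite !inE => /or4P [| | |/or3P [| |]] /eqP E; subst a;
      rewrite ?eqxx ?orbT //.
    - by rewrite Ha in Hi.
    - by rewrite Ha in Hj.
    - by rewrite Ha in Hk.
  have nm : ~~ (0 < r2 M l m) by apply: nr; rewrite !inE eqxx.
  have nn : ~~ (0 < r2 M l n) by apply: nr; rewrite !inE eqxx orbT.
  case Hm: (in_row M m x); last first.
    exfalso; apply: (two_case HM hq hC Hl _ nn).
    apply/subsetP => a Ha; move/subsetP: R3 => /(_ a Ha); rewrite !inE.
    by move=> /orP [/orP [] | ] /eqP E; rewrite E ?eqxx ?orbT //; move: Ha; rewrite E inE Hm.
  case Hn: (in_row M n x); last first.
    exfalso; apply: (two_case HM hq hC Hl _ nm).
    apply/subsetP => a Ha; move/subsetP: R3 => /(_ a Ha); rewrite !inE.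
    by move=> /orP [/orP [] | ] /eqP E; rewrite E ?eqxx ?orbT //; move: Ha; rewrite E inE Hn.
  rewrite Hl /= andbT freq_rows //.
  have c3 : #|[set l; m; n]| = 3.
    have -> : #|[set l; m; n]| = #|[:: l; m; n]| by apply: eq_card => z; rewrite !inE ?orbF ?orbA.
    by apply/card_uniqP; rewrite /= !inE !negb_or d13 d14 d15.
  have R3' : [set l; m; n] \subset rowsc M x.
    by apply/subsetP => a; rewrite !inE => /orP [/orP [] | ] /eqP ->.
  have := subset_leq_card R3; have := subset_leq_card R3'; rewrite c3 => h1 h2.
  by rewrite eqn_leq h1 h2.
have := subset_leq_card sub; rewrite -/(r3 M l m n) => hr.
move: hA hr; set x := #|A|; set y := r3 M l m n; clearbody x y => hA hr; clear -hA hr hs1 hs7 hq.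
lia.
Qed.
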